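(* Let $p$ be a prime, let $r,s$ be positive integers with $r\le s$, and let $m\ge 0$ be the smallest integer with $r\leq p^m$. Then $\lambda(r,s,p)$ is the uniform partition $(s,s,\dots,s)$ (equivalently the deviation vector $\varepsilon(r,s,p)$ equals $(0,\dots,0)$) if and only if $s\equiv 0\pmod{p^m}$.
   Context: For a positive integer $n$, let $J_n$ denote the $n\times n$ matrix with $1$s in positions $(i,i)$ for $1\le i\le n$ and $(i,i+1)$ for $1\le i<n$, and $0$s elsewhere. For $1\le r\le s$ and a field $F$ of characteristic $p$, the Jordan canonical form of $J_r\otimes J_s$ over $F$ is $J_{\lambda_1}\oplus\cdots\oplus J_{\lambda_r}$ with $\lambda_1\ge\cdots\ge\lambda_r>0$; write $\lambda(r,s,p)=(\lambda_1,\dots,\lambda_r)$ (a partition of $rs$ depending only on $r,s,p$). The deviation vector is $\varepsilon(r,s,p)=(\lambda_1-s,\dots,\lambda_r-s)$. *)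

(* Defs.v *)
From HB Require Import structures.
From mathcomp Require Import all_boot all_order all_algebra.
Set Implicit Arguments. Unset Strict Implicit. Unset Printing Implicit Defensive.
Import GRing.Theory.
Local Open Scope ring_scope.

(* Entry (i,j) of A for natural-number indices, 0 outside the range. *)
Definition mx_at (R : nzRingType) (m n : nat) (A : 'M[R]_(m, n)) (i j : nat) : R :=
  match @insub nat (fun k => k < m)%N _ i, @insub nat (fun k => k < n)%N _ j with
  | Some i', Some j' => A i' j'
  | _, _ => 0
  end.

Definition kron (R : nzRingType) (m n p q : nat)
  (A : 'M[R]_(m, n)) (B : 'M[R]_(p, q)) : 'M[R]_(m * p, n * q) :=
  \matrix_(i < m * p, j < n * q)
     (mx_at A (i %/ p) (j %/ q) * mx_at B (i %% p) (j %% q)).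

Definition jordan1 (R : nzRingType) (n : nat) : 'M[R]_n :=
  \matrix_(i < n, j < n) (((i : nat) == j) || ((j : nat) == i.+1))%:R.

(* Main.v *)
Require Import Defs.
From HB Require Import structures.
From mathcomp Require Import all_boot all_order all_algebra.
From mathcomp Require Import zify ring.
Set Implicit Arguments. Unset Strict Implicit. Unset Printing Implicit Defensive.
Import GRing.Theory.
Local Open Scope ring_scope.

Section Basics.
Variable R : comNzRingType.

Lemma mx_at_in m n (A : 'M[R]_(m, n)) i j (hi : (i < m)%N) (hj : (j < n)%N) :
  mx_at A i j = A (Ordinal hi) (Ordinal hj).
Proof. by rewrite /mx_at (insubT (fun k => k < m)%N hi) (insubT (fun k => k < n)%N hj). Qed.

Lemma mx_at_ord m n (A : 'M[R]_(m, n)) (i : 'I_m) (j : 'I_n) :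
  mx_at A i j = A i j.
Proof. by rewrite (mx_at_in A (ltn_ord i) (ltn_ord j)); congr (A _ _); apply: val_inj. Qed.

Lemma mx_at_outl m n (A : 'M[R]_(m, n)) i j : (m <= i)%N -> mx_at A i j = 0.
Proof. by move=> h; rewrite /mx_at insubF // ltnNge h. Qed.

Lemma mx_at_outr m n (A : 'M[R]_(m, n)) i j : (n <= j)%N -> mx_at A i j = 0.
Proof. by move=> h; rewrite /mx_at; case: insub => // ?; rewrite insubF // ltnNge h. Qed.

Lemma sum_split (V : nmodType) r s (h : nat -> V) :
  \sum_(0 <= t < r * s) h t = \sum_(0 <= i < r) \sum_(0 <= j < s) h (i * s + j)%N.
Proof.
elim: r => [|r IH]; first by rewrite mul0n !big_geq.
rewrite mulSnr (@big_cat_nat _ _ _ (r * s)) ?leq_addr //= IH big_nat_recr //=; congr (_ + _).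
rewrite -{1}[(r * s)%N]add0n big_addn addKn; apply: eq_bigr => j _; by rewrite addnC.
Qed.

Lemma divmod_small i j s : (j < s)%N -> ((i * s + j) %/ s = i)%N /\ ((i * s + j) %% s = j)%N.
Proof.
move=> hj; have s0 : (0 < s)%N by apply: leq_ltn_trans hj.
by rewrite divnMDl // divn_small // addn0 modnMDl modn_small.
Qed.

Lemma lt_mul_add i j r s : (i < r)%N -> (j < s)%N -> (i * s + j < r * s)%N.
Proof.
move=> hi hj; apply: (@leq_trans (i.+1 * s)); first by rewrite mulSnr ltn_add2l.
by rewrite leq_mul2r hi orbT.
Qed.

Lemma mx_at_mul m n k (A : 'M[R]_(m, n)) (B : 'M[R]_(n, k)) i j :
  mx_at (A *m B) i j = \sum_(0 <= t < n) mx_at A i t * mx_at B t j.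
Proof.
case: (ltnP i m) => hi; last first.
  by rewrite mx_at_outl // big1 // => t _; rewrite mx_at_outl ?mul0r.
case: (ltnP j k) => hj; last first.
  by rewrite mx_at_outr // big1 // => t _; rewrite (mx_at_outr B) ?mulr0.
rewrite (mx_at_in _ hi hj) mxE big_mkord; apply: eq_bigr => t _.
rewrite (mx_at_in A hi (ltn_ord t)) (mx_at_in B (ltn_ord t) hj).
by congr (A _ _ * B _ _); apply: val_inj.
Qed.


Lemma mx_at_kron m n p q (A : 'M[R]_(m, n)) (B : 'M[R]_(p, q)) k l :
  (k < m * p)%N -> (l < n * q)%N ->
  mx_at (kron A B) k l = mx_at A (k %/ p) (l %/ q) * mx_at B (k %% p) (l %% q).
Proof. by move=> hk hl; rewrite (mx_at_in _ hk hl) mxE. Qed.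

Lemma kron_mul m n p q n' q' (A : 'M[R]_(m, n)) (B : 'M[R]_(p, q))
  (C : 'M[R]_(n, n')) (D : 'M[R]_(q, q')) :
  kron A B *m kron C D = kron (A *m C) (B *m D).
Proof.
apply/matrixP => k l; rewrite -mx_at_ord mx_at_mul sum_split [RHS]mxE !mx_at_mul.
rewrite mulr_suml; apply: eq_big_nat => i /andP[_ hi].
rewrite mulr_sumr; apply: eq_big_nat => j /andP[_ hj].
have [e1 e2] := divmod_small i hj.
rewrite !mx_at_kron ?ltn_ord ?lt_mul_add // e1 e2; ring.
Qed.

Lemma mx_atD m n (A1 A2 : 'M[R]_(m, n)) i j :
  mx_at (A1 + A2) i j = mx_at A1 i j + mx_at A2 i j.
Proof.
case: (ltnP i m) => hi; last by rewrite !mx_at_outl ?addr0.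
case: (ltnP j n) => hj; last by rewrite !mx_at_outr ?addr0.
by rewrite !(mx_at_in _ hi hj) mxE.
Qed.

Lemma kronDl m n p q (A1 A2 : 'M[R]_(m, n)) (B : 'M[R]_(p, q)) :
  kron (A1 + A2) B = kron A1 B + kron A2 B.
Proof.
apply/matrixP => k l; rewrite !mxE /mx_at.
case: insub => [a|]; case: insub => [b|]; rewrite ?mxE ?mulrDl ?mul0r ?addr0 //.
Qed.

Lemma kronDr m n p q (A : 'M[R]_(m, n)) (B1 B2 : 'M[R]_(p, q)) :
  kron A (B1 + B2) = kron A B1 + kron A B2.
Proof.
apply/matrixP => k l; rewrite !mxE -mulrDr; congr (_ * _) => //.
exact: mx_atD.
Qed.

Lemma kron11 m p : kron (1%:M : 'M[R]_m) (1%:M : 'M[R]_p) = 1%:M.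
Proof.
apply/matrixP => k l; rewrite !mxE.
have hk := ltn_ord k; have hl := ltn_ord l.
have /andP[_ p0] : (0 < m * p)%N && (0 < p)%N.
  by have h0 : (0 < m * p)%N := leq_ltn_trans (leq0n _) hk; rewrite h0 /=; move: h0; rewrite muln_gt0 => /andP[].
have hk1 : (k %/ p < m)%N by rewrite ltn_divLR.
have hl1 : (l %/ p < m)%N by rewrite ltn_divLR.
rewrite (mx_at_in _ hk1 hl1) (mx_at_in _ (ltn_pmod k p0) (ltn_pmod l p0)) !mxE.
rewrite -natrM mulnb; congr (_ %:R); congr nat_of_bool.
rewrite -[Ordinal hk1 == _]/(k %/ p == l %/ p)%N -[Ordinal (ltn_pmod k p0) == _]/(k %% p == l %% p)%N.
apply/idP/idP => [/andP[/eqP e1 /eqP e2]|/eqP->]; last by rewrite !eqxx.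
by apply/eqP/val_inj; rewrite /= (divn_eq k p) (divn_eq l p) e1 e2.
Qed.

End Basics.

Section Part2.
Variable R : comNzRingType.

Definition Nr n : 'M[R]_n := \matrix_(i < n, j < n) ((j : nat) == i.+1)%:R.

Lemma jordanE n : jordan1 R n = 1%:M + Nr n.
Proof.
apply/matrixP => i j; rewrite !mxE.
case: (eqVneq i j) => [->|ne]; first by rewrite eqxx /= ltn_eqF // addr0.
have ne' : (i : nat) != j by apply: contra ne => /eqP/val_inj ->.
by rewrite (negbTE ne') /= add0r.
Qed.

Lemma sum_delta n k (g : nat -> R) :
  \sum_(0 <= j < n) (j == k)%:R * g j = if (k < n)%N then g k else 0.
Proof.
rewrite (eq_bigr (fun j => if j == k then g j else 0)); last by move=> j _; case: eqP; rewrite ?mul1r ?mul0r.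
by rewrite -big_mkcond big_nat1_eq.
Qed.

Definition xX : {poly {poly R}} := 'X.
Definition yY : {poly {poly R}} := ('X)%:P.

Variables r s : nat.

Definition Nx : 'M[R]_(r * s) := kron (Nr r) (1%:M : 'M[R]_s).
Definition Ny : 'M[R]_(r * s) := kron (1%:M : 'M[R]_r) (Nr s).

Definition trunc (f : {poly {poly R}}) : 'rV[R]_(r * s) :=
  \row_(l < r * s) (f`_(l %/ s))`_(l %% s).

Lemma row_mul_sum (v : 'rV[R]_(r * s)) (M : 'M[R]_(r * s)) (l : 'I_(r * s)) :
  (v *m M) 0 l = \sum_(0 <= i < r) \sum_(0 <= j < s)
     mx_at v 0 (i * s + j) * mx_at M (i * s + j)%N l.
Proof. by rewrite -[LHS](mx_at_ord (v *m M) 0 l) mx_at_mul sum_split. Qed.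

Lemma mx_at_trunc f i j : (i < r)%N -> (j < s)%N ->
  mx_at (trunc f) 0 (i * s + j) = f`_i`_j.
Proof.
move=> hi hj; rewrite (mx_at_in _ (ltn0Sn 0) (lt_mul_add hi hj)) mxE /=.
by have [-> ->] := divmod_small i hj.
Qed.

Lemma truncD f g : trunc (f + g) = trunc f + trunc g.
Proof. by apply/matrixP => i j; rewrite !mxE !coefD. Qed.

Lemma trunc0 : trunc 0 = 0.
Proof. by apply/matrixP => i j; rewrite !mxE !coef0. Qed.

Lemma modn_lt (l : 'I_(r * s)) : (l %% s < s)%N.
Proof.
have := ltn_ord l; move: (nat_of_ord l) => n.
by case: s => [|s']; rewrite ?muln0 // ltn_mod.
Qed.

Lemma divn_lt (l : 'I_(r * s)) : (l %/ s < r)%N.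
Proof.
have := ltn_ord l; move: (nat_of_ord l) => n.
by case: s => [|s']; rewrite ?muln0 // ltn_divLR.
Qed.

Lemma truncX f : trunc (f * xX) = trunc f *m Nx.
Proof.
rewrite /xX.
apply/rowP => l; rewrite row_mul_sum mxE.
have hl1 := divn_lt l; have hl2 := modn_lt l.
rewrite (eq_big_nat _ _ (F2 := fun i => ((l %/ s)%N == i.+1)%:R * f`_i`_(l %% s))); last first.
  move=> i /andP[_ hi].
  rewrite (eq_big_nat _ _ (F2 := fun j => (j == (l %% s)%N)%:R * (((l %/ s)%N == i.+1)%:R * f`_i`_j))); last first.
    move=> j /andP[_ hj]; rewrite mx_at_trunc // /Nx mx_at_kron ?lt_mul_add //.
    have [-> ->] := divmod_small i hj.
    rewrite (mx_at_in _ hi hl1) (mx_at_in _ hj hl2) !mxE /=; ring.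
  by rewrite sum_delta hl2.
rewrite coefMX; case: (l %/ s)%N hl1 => [|k] hk /=.
  by rewrite coef0 big1 // => i _; rewrite mul0r.
rewrite (eq_bigr (fun i => (i == k)%:R * f`_i`_(l %% s))); last by move=> i _; rewrite eqSS eq_sym.
by rewrite sum_delta ltnW.
Qed.

Lemma truncY f : trunc (f * yY) = trunc f *m Ny.
Proof.
rewrite /yY.
apply/rowP => l; rewrite row_mul_sum mxE.
have hl1 := divn_lt l; have hl2 := modn_lt l.
rewrite (eq_big_nat _ _ (F2 := fun i => (i == (l %/ s)%N)%:R * ((f`_i * 'X)`_(l %% s)))); last first.
  move=> i /andP[_ hi].
  rewrite (eq_big_nat _ _ (F2 := fun j => (i == (l %/ s)%N)%:R * (((l %% s)%N == j.+1)%:R * f`_i`_j))); last first.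
    move=> j /andP[_ hj]; rewrite mx_at_trunc // /Ny mx_at_kron ?lt_mul_add //.
    have [-> ->] := divmod_small i hj.
    rewrite (mx_at_in _ hi hl1) (mx_at_in _ hj hl2) !mxE /=; ring.
  rewrite -mulr_sumr coefMX; congr (_ * _).
  case: (l %% s)%N hl2 => [|k] hk /=.
    by rewrite big1 // => j _; rewrite mul0r.
  rewrite (eq_bigr (fun j => (j == k)%:R * f`_i`_j)); last by move=> j _; rewrite eqSS eq_sym.
  by rewrite sum_delta ltnW.
by rewrite sum_delta hl1 coefMC.
Qed.

End Part2.

Section Alg.
Variable R : comNzRingType.

Lemma pow_split (a b : R) n : exists H, (a + b) ^+ n = b ^+ n + a * H.
Proof.
elim: n => [|n [H IH]]; first by exists 0; rewrite !expr0 mulr0 addr0.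
exists (b ^+ n + H * (a + b)); rewrite exprSr IH exprSr; ring.
Qed.

Lemma pow_split2 (a b : R) n :
  exists H, (b + a) ^+ n = b ^+ n + n%:R * b ^+ n.-1 * a + a ^+ 2 * H.
Proof.
elim: n => [|n [H IH]]; first by exists 0; rewrite !expr0 mulr0 addr0 mul0r mul0r addr0.
exists ((n%:R * b ^+ n.-1) + H * (b + a)); rewrite exprSr IH /=.
case: n IH => [|n] IH /=; first by rewrite !expr0 mul0r; ring.
rewrite !exprS -[n.+2]addn1 natrD; ring.
Qed.

End Alg.

Section Frob.
Variables (F : comNzRingType) (p : nat).
Hypothesis pp : prime p.
Hypothesis pF : p \in [pchar F].

Definition PP := {poly {poly F}}.
Definition GG : {poly {poly F}} := xX F + yY F + xX F * yY F.

Lemma pnat_PP k : ([pchar PP]).-nat (p ^ k)%N.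
Proof.
have pP : p \in [pchar PP] by rewrite /PP !pchar_poly.
rewrite (eq_pnat _ (pcharf_eq pP)) pnatX pnat_id //.
Qed.

Lemma GG_frob k : GG ^+ (p ^ k)%N = xX F ^+ (p ^ k)%N + yY F ^+ (p ^ k)%N + xX F ^+ (p ^ k)%N * yY F ^+ (p ^ k)%N.
Proof.
have E : GG = (1 + xX F) * (1 + yY F) + (- 1) by rewrite /GG; ring.
have h := pnat_PP k.
rewrite E exprDn_pchar // exprNn_pchar // expr1n exprMn !exprDn_pchar // !expr1n.
ring.
Qed.

End Frob.

Section Main.
Variables (F : comNzRingType) (r s : nat).
Local Notation AA := (kron (jordan1 F r) (jordan1 F s)).
Local Notation YY := (kron (1%:M : 'M[F]_r) (jordan1 F s)).
Local Notation Nx := (Nx F r s).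
Local Notation Ny := (Ny F r s).
Local Notation trunc := (trunc r s).

Lemma AAE : AA = 1 + (Nx + Ny + Nx * Ny).
Proof.
rewrite !jordanE kronDl !kronDr kron11 /Nx /Ny -mulmxE kron_mul mulmx1 mul1mx.
by rewrite !addrA; congr (_ + _); rewrite -!addrA; congr (_ + _); rewrite addrC.
Qed.

Lemma YYE : YY = 1 + Ny.
Proof. by rewrite jordanE kronDr kron11. Qed.

Lemma NxNy : Nx * Ny = Ny * Nx.
Proof. by rewrite /Nx /Ny -!mulmxE !kron_mul !mulmx1 !mul1mx. Qed.

Lemma truncG f : trunc (f * GG F) = trunc f *m (AA - 1).
Proof.
rewrite AAE addrC addKr /GG !mulrDr !truncD mulrA (truncX r s f) (truncY r s f) (truncY r s (f * xX F)) (truncX r s f).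
by rewrite !mulmxDr -mulmxE mulmxA.
Qed.

Lemma truncGn f n : trunc (f * GG F ^+ n) = trunc f *m (AA - 1) ^+ n.
Proof.
elim: n f => [|n IH] f; first by rewrite !expr0 mulr1 mulmx1.
by rewrite exprSr mulrA truncG IH -mulmxA mulmxE -exprSr.
Qed.

Lemma truncYn f n : trunc (f * yY F ^+ n) = trunc f *m Ny ^+ n.
Proof.
elim: n f => [|n IH] f; first by rewrite !expr0 mulr1 mulmx1.
by rewrite exprSr mulrA truncY IH -mulmxA mulmxE -exprSr.
Qed.

End Main.

Section P5.
Variables (F : comNzRingType) (r s : nat).
Local Notation AA := (kron (jordan1 F r) (jordan1 F s)).
Local Notation YY := (kron (1%:M : 'M[F]_r) (jordan1 F s)).
Local Notation Nx := (Nx F r s).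
Local Notation Ny := (Ny F r s).
Local Notation trunc := (trunc r s).
Local Notation x := (xX F).
Local Notation y := (yY F).

Lemma xXn n : x ^+ n = 'X^n.
Proof. by []. Qed.

Lemma coef_xy i j a b : (x ^+ i * y ^+ j)`_a`_b = ((a == i) && (b == j))%:R.
Proof.
rewrite /xX /yY -(rmorphXn polyC) coefMC coefXn.
by case: (a == i); rewrite ?mul1r ?mul0r ?coefXn ?coef0.
Qed.

Lemma trunc_xy i j (hi : (i < r)%N) (hj : (j < s)%N) :
  trunc (x ^+ i * y ^+ j) = delta_mx 0 (Ordinal (lt_mul_add hi hj)).
Proof.
apply/rowP => l; rewrite !mxE coef_xy /=; congr (_ %:R); congr nat_of_bool.
apply/idP/idP => [/andP[/eqP e1 /eqP e2]|/eqP ->].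
  by apply/eqP/val_inj; rewrite /= (divn_eq l s) e1 e2.
by have [-> ->] := divmod_small i hj; rewrite !eqxx.
Qed.

Lemma trunc_xy_big i j : (s <= j)%N -> trunc (x ^+ i * y ^+ j) = 0.
Proof.
move=> hj; apply/rowP => l; rewrite !mxE coef_xy.
rewrite andbC; case: eqP => // e; by have := modn_lt l; rewrite e ltnNge hj.
Qed.

Lemma ord_decomp (k : 'I_(r * s)) : k = Ordinal (lt_mul_add (divn_lt k) (modn_lt k)).
Proof. by apply: val_inj; rewrite /= -divn_eq. Qed.

Lemma mx_zero (M : 'M[F]_(r * s)) :
  (forall i j, (i < r)%N -> (j < s)%N -> trunc (x ^+ i * y ^+ j) *m M = 0) -> M = 0.
Proof.
move=> h; apply/row_matrixP => k; rewrite row0 rowE (ord_decomp k) -trunc_xy.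
exact: h (divn_lt k) (modn_lt k).
Qed.

Definition Pm : 'M[F]_(r * s) :=
  \matrix_(k < r * s, l < r * s) (trunc (x ^+ (k %/ s) * GG F ^+ (k %% s))) 0 l.

Lemma row_Pm k : row k Pm = trunc (x ^+ (k %/ s) * GG F ^+ (k %% s)).
Proof. by apply/rowP => l; rewrite !mxE. Qed.

Lemma Pm_sim : (AA - 1) ^+ s = 0 -> Pm *m AA = YY *m Pm.
Proof.
move=> hs.
suff H : Pm *m (AA - 1) = Ny *m Pm.
  by rewrite YYE -[AA](addrNK 1) addrC mulmxDr mulmxDl H mulmx1 mul1mx.
apply/row_matrixP => k; rewrite !row_mul row_Pm -(truncG r s) -mulrA -exprSr rowE.
rewrite [X in delta_mx 0 X](ord_decomp k) -trunc_xy -(truncY r s) -mulrA -exprSr.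
have hk1 := divn_lt k; have hk2 := modn_lt k.
case: (ltnP (k %% s).+1 s) => h.
  rewrite (trunc_xy hk1 h) -rowE row_Pm /=.
  by have [-> ->] := divmod_small (k %/ s) h.
have e : (k %% s).+1 = s by apply/eqP; rewrite eqn_leq h hk2.
rewrite e trunc_xy_big // mul0mx (truncGn r s) hs mulmx0 //.
Qed.

Lemma Pm_entry (k l : 'I_(r * s)) : (l <= k)%N -> Pm k l = (k == l)%:R.
Proof.
move=> hlk; rewrite mxE.
have [H eH] := pow_split (x * (1 + y)) y (k %% s).
have EG : GG F = x * (1 + y) + y by rewrite /GG; ring.
rewrite EG eH mulrDr mxE coefD coefD coef_xy !mulrA -exprSr -mulrA xXn coefXnM.
have hl1 : (l %/ s <= k %/ s)%N by apply: leq_div2r.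
rewrite ltnS hl1 coef0 addr0; congr (_ %:R); congr nat_of_bool.
apply/idP/idP => [/andP[/eqP e1 /eqP e2]|/eqP ->]; last by rewrite !eqxx.
by apply/eqP/val_inj; rewrite /= (divn_eq l s) e1 e2 -divn_eq.
Qed.

Lemma det_Pm : \det Pm = 1.
Proof.
rewrite -det_tr det_trig; last first.
  apply/is_trig_mxP => i j hij; rewrite mxE Pm_entry ?(ltnW hij) //.
  by case: eqP hij => // ->; rewrite ltnn.
by rewrite big1 // => i _; rewrite mxE Pm_entry // eqxx.
Qed.

End P5.

Section P6.
Variables (F : comNzRingType) (r s : nat).
Local Notation AA := (kron (jordan1 F r) (jordan1 F s)).
Local Notation Nx := (Nx F r s).
Local Notation Ny := (Ny F r s).
Local Notation trunc := (trunc r s).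
Local Notation x := (xX F).
Local Notation y := (yY F).

Lemma trunc_xbig n g : (r <= n)%N -> trunc (x ^+ n * g) = 0.
Proof.
move=> hn; apply/rowP => l; rewrite !mxE xXn coefXnM.
by rewrite (leq_trans (divn_lt l) hn) coef0.
Qed.

Lemma key_coef q b : (0 < q)%N -> (0 < b)%N ->
  GG F ^+ q = x ^+ q + y ^+ q + x ^+ q * y ^+ q ->
  (GG F ^+ (q * b))`_q`_(q * b - q) = b%:R.
Proof.
move=> hq hb Gq.
have E : GG F ^+ q = y ^+ q + x ^+ q * (1 + y ^+ q) by rewrite Gq; ring.
have [H eH] := pow_split2 (x ^+ q * (1 + y ^+ q)) (y ^+ q) b.
rewrite exprM E eH -exprM.
have e1 : (x ^+ q * (1 + y ^+ q)) ^+ 2 * H = x ^+ (q + q) * ((1 + y ^+ q) ^+ 2 * H).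
  by rewrite exprD exprMn !mulrA expr2 (mulrC (x ^+ q)) -!mulrA; congr (_ * _); rewrite !mulrA (mulrC (x ^+ q)).
have e2 : b%:R * (y ^+ q) ^+ b.-1 * (x ^+ q * (1 + y ^+ q)) =
   (x ^+ q * y ^+ (q * b.-1)) *+ b + (x ^+ q * y ^+ (q * b.-1 + q)) *+ b.
  rewrite exprD -exprM -mulrnDl -[(_ + _) *+ b]mulr_natl.
  move: (x ^+ q) (y ^+ q) (y ^+ (q * b.-1)) (b%:R : {poly {poly F}}) => X Y2 Y1 B.
  ring.
rewrite e1 e2 !coefD coefMn coefMn !coef_xy.
have hqq : (q < q + q)%N by rewrite -{1}[q]addn0 ltn_add2l.
rewrite xXn coefXnM hqq coef0 addr0 -xXn !coefMn !coef_xy.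
rewrite -[y ^+ (q * b)]mul1r -(expr0 x) coef_xy.
have qn0 : (q == 0)%N = false by rewrite eqn0Ngt hq.
have e3 : (q * b - q = q * b.-1)%N by rewrite -subn1 mulnBr muln1.
have e4 : ((q * b.-1)%N == (q * b.-1 + q)%N) = false.
  by rewrite -{1}[(q * b.-1)%N]addn0 eqn_add2l eq_sym qn0.
rewrite qn0 e3 eqxx e4 /= add0r mul0rn addr0.
by rewrite eqxx.
Qed.


Lemma AA_nil p m : prime p -> p \in [pchar F] -> (p ^ m %| s)%N -> (r <= p ^ m)%N ->
  (AA - 1) ^+ s = 0.
Proof.
move=> pp pF /dvdnP [b es] hr.
apply: mx_zero => i j hi hj.
rewrite -(truncGn r s) (_ : GG F ^+ s = GG F ^+ (p ^ m * b)); last by rewrite es mulnC.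
rewrite exprM GG_frob //.
have E : x ^+ (p ^ m) + y ^+ (p ^ m) + x ^+ (p ^ m) * y ^+ (p ^ m)
   = x ^+ (p ^ m) * (1 + y ^+ (p ^ m)) + y ^+ (p ^ m) by ring.
have [H eH] := pow_split (x ^+ (p ^ m) * (1 + y ^+ (p ^ m))) (y ^+ (p ^ m)) b.
rewrite E eH mulrDr truncD -exprM -mulrA -exprD.
have e2 : x ^+ i * y ^+ j * (x ^+ (p ^ m) * (1 + y ^+ (p ^ m)) * H) =
   x ^+ (i + p ^ m) * (y ^+ j * (1 + y ^+ (p ^ m)) * H) by rewrite exprD; ring.
have hs : (s <= j + p ^ m * b)%N by rewrite es mulnC leq_addl.
rewrite e2 (@trunc_xy_big F r s i _ hs) add0r trunc_xbig //.
exact: leq_trans hr (leq_addl _ _).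
Qed.

Lemma Ny_nil : Ny ^+ s = 0.
Proof.
apply: mx_zero => i j hi hj.
by rewrite -(truncYn r s) -mulrA -exprD (@trunc_xy_big F r s i _ (leq_addl _ _)).
Qed.

End P6.

Theorem proposition3 (F : fieldType) (p r s m : nat) :
  prime p -> p \in [pchar F] ->
  (0 < r)%N -> (r <= s)%N ->
  (r <= p ^ m)%N -> (forall k : nat, (r <= p ^ k)%N -> (m <= k)%N) ->
  (similar_in unitmx (kron (jordan1 F r) (jordan1 F s))
                     (kron (1%:M : 'M[F]_r) (jordan1 F s))
   <-> (p ^ m %| s)%N).
Proof.
move=> pp pF r0 rs hr hmin; split; last first.
  move=> d; exists (Pm F r s).
    by rewrite unitmxE det_Pm unitr1.
  apply/similarP; first by rewrite unitmxE det_Pm unitr1.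
  exact: Pm_sim (AA_nil pp pF d hr).
case=> P Pu /(similarP Pu) eq.
have h1 : P *m (kron (jordan1 F r) (jordan1 F s) - 1) = Ny F r s *m P.
  by rewrite mulmxBr eq YYE mulmxDl mul1mx mulmx1 addrC addKr.
have hn : forall n, P *m (kron (jordan1 F r) (jordan1 F s) - 1) ^+ n = Ny F r s ^+ n *m P.
  elim=> [|n IH]; first by rewrite !expr0 mulmx1 mul1mx.
  by rewrite !exprSr -!mulmxE mulmxA IH -mulmxA h1 mulmxA.
have Z : (kron (jordan1 F r) (jordan1 F s) - 1) ^+ s = 0.
  by rewrite -[LHS]mul1mx -(mulVmx Pu) -mulmxA hn Ny_nil mul0mx mulmx0.
apply: contraT => nd.
have s0 : (0 < s)%N by apply: leq_trans rs.
pose a := logn p s; pose q := (p ^ a)%N; pose b := (s %/ q)%N.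
have qs : (q %| s)%N := pfactor_dvdnn p s.
have sqb : s = (q * b)%N by rewrite mulnC divnK.
have q0 : (0 < q)%N by rewrite expn_gt0 prime_gt0.
have b0 : (0 < b)%N by move: s0; rewrite sqb muln_gt0 => /andP[].
have am : (a < m)%N.
  rewrite ltnNge; apply: contra nd => ma.
  exact: dvdn_trans (dvdn_exp2l p ma) qs.
have qr : (q < r)%N.
  by rewrite ltnNge; apply/negP => rq; have := hmin a rq; rewrite leqNgt am.
have pb : ~~ (p %| b)%N.
  apply/negP => /dvdnP[c ec].
  have : (p ^ a.+1 %| s)%N by rewrite sqb ec /q expnSr dvdn_mul // dvdn_mull.
  by rewrite pfactor_dvdn // ltnn.
have sq : (s - q < s)%N by rewrite ltn_subrL q0.
have C : (GG F ^+ s)`_q`_(s - q) = 0.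
  have H := @truncGn F r s 1 s; rewrite Z mulmx0 mul1r in H.
  have := congr1 (fun v : 'rV[F]_(r * s) => v 0 (Ordinal (lt_mul_add qr sq))) H.
  rewrite !mxE /=.
  by have [-> ->] := divmod_small q sq.
have K := key_coef q0 b0 (GG_frob pp pF a).
move: K; rewrite -sqb C => /esym/eqP.
by rewrite -(dvdn_pcharf pF) (negbTE pb).
Qed.
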